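(* Let $n$ be odd and let $P$ be a generic $n$-gon in $\mathbb{R}^3$. If $P$ is not regular, then its mirror image (image under a reflection of $\mathbb{R}^3$ in a plane) is regular.
   Context: For a closed polygon $P=A_1\ldots A_n$ in $\mathbb{R}^3$ put $v_1=\overline{A_1A_2},\ldots,v_n=\overline{A_nA_1}$, indices cyclic mod $n$. $P$ is generic if any two consecutive $v_i,v_{i+1}$ are not collinear and any three consecutive $v_i,v_{i+1},v_{i+2}$ are not coplanar. A support system of $P$ is a tuple $u_1,\ldots,u_n$ of vectors with $[u_i,u_{i+1}]=v_{i+1}$ for all $i$ (cyclically; $[\cdot,\cdot]$ the cross product). A generic polygon is regular if it has a support system. *)

(* Defs.v *)
From HB Require Import structures.
From mathcomp Require Import all_boot all_order all_algebra.
From mathcomp Require Import reals.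
Set Implicit Arguments. Unset Strict Implicit. Unset Printing Implicit Defensive.
Import Order.TTheory GRing.Theory Num.Theory.
Local Open Scope ring_scope.

Section Poly3.
Variable R : realType.

Definition vec3 := 'rV[R]_3.

(* cross product: (u x v)_k = u_{k+1} v_{k+2} - u_{k+2} v_{k+1}, indices mod 3 *)
Definition cross (u v : vec3) : vec3 :=
  \row_(k < 3) (u 0 (k + 1)%R * v 0 (k + 1 + 1)%R - u 0 (k + 1 + 1)%R * v 0 (k + 1)%R).

Definition dot (u v : vec3) : R := \sum_(k < 3) u 0 k * v 0 k.

Definition collinear (u v : vec3) : bool := (\rank (col_mx u v) <= 1)%N.
Definition coplanar (u v w : vec3) : bool := (\rank (col_mx u (col_mx v w)) <= 2)%N.

(* a closed polygon A_1 ... A_n is a map 'I_n -> R^3; ordS is the cyclic successor *)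
Definition edge n (A : 'I_n -> vec3) (i : 'I_n) : vec3 := A (ordS i) - A i.

Definition generic n (A : 'I_n -> vec3) : Prop :=
  forall i : 'I_n,
    ~~ collinear (edge A i) (edge A (ordS i)) /\
    ~~ coplanar (edge A i) (edge A (ordS i)) (edge A (ordS (ordS i))).

Definition support_system n (A : 'I_n -> vec3) (u : 'I_n -> vec3) : Prop :=
  forall i : 'I_n, cross (u i) (u (ordS i)) = edge A (ordS i).

Definition regular n (A : 'I_n -> vec3) : Prop :=
  generic A /\ exists u : 'I_n -> vec3, support_system A u.

(* reflection of R^3 in the plane through p with normal vector nrm (nrm != 0) *)
Definition reflect_plane (p nrm : vec3) (x : vec3) : vec3 :=
  x - (2 * dot (x - p) nrm / dot nrm nrm) *: nrm.

End Poly3.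

(* Main.v *)
Require Import Defs.
From HB Require Import structures.
From mathcomp Require Import all_boot all_order all_algebra.
From mathcomp Require Import reals ring lra.
Import Order.TTheory GRing.Theory Num.Theory.
Local Open Scope ring_scope.

Lemma det3 (R : comNzRingType) (A : 'M[R]_3) : \det A =
  A 0 0 * (A 1 1 * A 2%:R 2%:R - A 1 2%:R * A 2%:R 1)
  - A 0 1 * (A 1 0 * A 2%:R 2%:R - A 1 2%:R * A 2%:R 0)
  + A 0 2%:R * (A 1 0 * A 2%:R 1 - A 1 1 * A 2%:R 0).
Proof.
rewrite (expand_det_row _ 0) !big_ord_recl big_ord0 /cofactor.
rewrite !(expand_det_row _ 0) !big_ord_recl !big_ord0 /cofactor !det_mx11 !mxE.
pose B (a b : nat) := A (inord a) (inord b).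
have hA : forall i j, A i j = B i j by move=> i j; rewrite /B !inord_val.
rewrite !hA /=. ring.
Qed.

Section S.
Variable R : realType.
Definition cc (x : 'M[R]_(1,3)) (a : nat) := x 0 (inord a).
Lemma ccE (x : 'M[R]_(1,3)) j : x 0 j = cc x j.
Proof. by rewrite /cc inord_val. Qed.

Lemma vec3P (x y : vec3 R) : (forall k : 'I_3, x 0 k = y 0 k) -> x = y.
Proof. by move=> h; apply/rowP => k; rewrite h. Qed.

Lemma cross_cross (a b c : vec3 R) :
  cross (cross a b) (cross b c) = dot (cross a b) c *: b.
Proof.
apply/vec3P => -[[|[|[|//]]] Hk]; rewrite /dot !big_ord_recl big_ord0 !mxE /= !ccE /=; ring.
Qed.

Lemma crossZ (x y : R) (a b : vec3 R) : cross (x *: a) (y *: b) = (x * y) *: cross a b.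
Proof.
apply/vec3P => -[[|[|[|//]]] Hk]; rewrite !mxE /= !ccE /=; ring.
Qed.

Lemma colE (a b c : vec3 R) (i : 'I_(1 + (1 + 1))) j :
  col_mx a (col_mx b c) i j = if val i == 0%N then a 0 j else if val i == 1%N then b 0 j else c 0 j.
Proof.
rewrite mxE; case: splitP => [k /= hk|k /= hk]; first by rewrite hk ord1.
rewrite mxE; case: splitP => [l /= hl|l /= hl]; first by rewrite hk hl !ord1.
by rewrite hk hl !ord1.
Qed.

Lemma det_colmx (a b c : vec3 R) : \det (col_mx a (col_mx b c)) = dot (cross a b) c.
Proof.
rewrite det3 /dot !big_ord_recl big_ord0 !colE !mxE /= !ccE /=; ring.
Qed.
Fixpoint qseq (f : nat -> R) (k : nat) : R := if k is k'.+1 then f k' / qseq f k' else 1.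

Lemma sq_gt0 (x : R) : x != 0 -> 0 < x ^+ 2.
Proof. by move=> hx; rewrite exprn_even_gt0 //= hx orbT. Qed.

Lemma qseq_pos f k : (forall j, (j < k)%N -> f j != 0) -> 0 < qseq f k * \prod_(j < k) f j.
Proof.
elim: k => [|k IH] hf; first by rewrite big_ord0 mulr1 ltr01.
have IH' := IH (fun j hj => hf j (ltnW hj)).
have hq : qseq f k != 0.
  by apply/eqP => h; move: IH'; rewrite h mul0r ltxx.
have hfk : f k != 0 := hf k (ltnSn k).
rewrite big_ord_recr /=.
have -> : f k / qseq f k * ((\prod_(i < k) f i) * f k) =
   f k ^+ 2 * (qseq f k * \prod_(i < k) f i) / qseq f k ^+ 2 by field.
apply: divr_gt0; [apply: mulr_gt0 => //; exact: sq_gt0 | exact: sq_gt0].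
Qed.

Lemma scal (n : nat) (c : 'I_n -> R) : odd n -> (forall i, c i != 0) ->
  0 < \prod_i c i -> exists lam : 'I_n -> R, forall i, lam i * lam (ordS i) = c i.
Proof.
case: n c => [//|m] c hodd hc hP.
pose f (k : nat) := c (inord k).
have hf : forall j, f j != 0 by move=> j; exact: hc.
have hqP := @qseq_pos f m.+1 (fun j _ => hf j).
have eP : \prod_(j < m.+1) f j = \prod_i c i.
  by apply: eq_bigr => i _; rewrite /f inord_val.
rewrite eP in hqP.
have hqn : 0 < qseq f m.+1 by rewrite -(pmulr_lgt0 _ hP).
have hqnz : forall k, qseq f k != 0.
  move=> k; apply/eqP => h; have := @qseq_pos f k (fun j _ => hf j).
  by rewrite h mul0r ltxx.
pose s := Num.sqrt (qseq f m.+1).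
have hs : 0 < s by rewrite /s sqrtr_gt0.
have hs2 : s ^+ 2 = qseq f m.+1 by rewrite /s sqr_sqrtr // ltW.
have hs0 : s != 0 by rewrite gt_eqF.
pose L (k : nat) := if odd k then qseq f k / s else qseq f k * s.
have hL : forall k, L k * L k.+1 = f k.
  move=> k; rewrite /L /=; have hk := hqnz k.
  by case: (odd k) => /=; field; rewrite hk hs0.
have hLn : L m.+1 = L 0%N.
  by rewrite /L hodd -hs2 /=; field.
exists (fun i => L (val i)) => i.
rewrite /=.
have hi := ltn_ord i.
case: (ltnP i m) => him.
  by rewrite modn_small // hL /f inord_val.
have him' : val i = m by apply/eqP; rewrite eqn_leq him -ltnS hi.
rewrite him' modnn -hLn hL /f; congr c; apply/val_inj; rewrite /= inordK //.
Qed.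

Lemma dot_neq0 (nrm : vec3 R) : nrm != 0 -> dot nrm nrm != 0.
Proof.
move=> hn; apply/eqP => h; move/eqP: hn; apply; apply/vec3P => k; rewrite [RHS]mxE.
move: h; rewrite /dot !big_ord_recl big_ord0 /= !ccE /= => h.
case: k => -[|[|[|//]]] Hk /=; nra.
Qed.

Definition Hm (nrm : vec3 R) : 'M[R]_3 :=
  \matrix_(i, j) ((i == j)%:R - 2 / dot nrm nrm * nrm 0 i * nrm 0 j).

Lemma detHm nrm : nrm != 0 -> \det (Hm nrm) = -1.
Proof.
move=> /dot_neq0 hN.
rewrite det3 !mxE /=; move: hN; rewrite /dot !big_ord_recl big_ord0 /= !ccE /= => hN.
by field; move: hN; rewrite addr0.
Qed.

Lemma edge_refl n (A : 'I_n -> vec3 R) p nrm i : nrm != 0 ->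
  edge (fun i => reflect_plane p nrm (A i)) i = edge A i *m Hm nrm.
Proof.
move=> /dot_neq0 hN; apply/vec3P => k.
move: hN; rewrite /edge /reflect_plane !mxE /dot !big_ord_recl !big_ord0 !mxE /dot !big_ord_recl !big_ord0 /= !ccE /bump /= addr0 => hN.
case: k => -[|[|[|//]]] Hk /=; field; done.
Qed.

Definition Dt n (v : 'I_n -> vec3 R) (i : 'I_n) :=
  \det (col_mx (v i) (col_mx (v (ordS i)) (v (ordS (ordS i))))).

Arguments Dt {n}.

Lemma generic_Dt n (A : 'I_n -> vec3 R) : generic A -> forall i, Dt (edge A) i != 0.
Proof.
move=> hg i; have [_ hc] := hg i.
rewrite /Dt -unitfE -unitmxE -row_free_unit /row_free.
move: hc; rewrite /coplanar -ltnNge => hc.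
by rewrite eqn_leq rank_leq_row.
Qed.

Lemma suff n (A : 'I_n -> vec3 R) : odd n -> (forall i, Dt (edge A) i != 0) ->
  0 < \prod_i Dt (edge A) i -> exists u, support_system A u.
Proof.
move=> hodd hD hP.
have hc : 0 < \prod_i (Dt (edge A) i)^-1 by rewrite prodfV invr_gt0.
have [lam hlam] := @scal n (fun i => (Dt (edge A) i)^-1) hodd
  (fun i => invr_neq0 (hD i)) hc.
exists (fun i => lam i *: cross (edge A i) (edge A (ordS i))) => i.
rewrite crossZ cross_cross scalerA hlam -det_colmx -/(Dt (edge A) i) mulVf ?scale1r //.
Qed.

Lemma generic_refl n (A : 'I_n -> vec3 R) p nrm : nrm != 0 -> generic A ->
  generic (fun i => reflect_plane p nrm (A i)).
Proof.
move=> hn hg i; have hfree : row_free (Hm nrm).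
  by rewrite row_free_unit unitmxE detHm // unitfE oppr_eq0 oner_eq0.
rewrite /collinear /coplanar !edge_refl // -!mul_col_mx !mxrankMfree //.
exact: hg.
Qed.

Lemma Dt_refl n (A : 'I_n -> vec3 R) p nrm i : nrm != 0 ->
  Dt (edge (fun i => reflect_plane p nrm (A i))) i = - Dt (edge A) i.
Proof.
move=> hn; rewrite /Dt !edge_refl // -!mul_col_mx det_mulmx detHm // mulrN1.
reflexivity.
Qed.

End S.
Arguments Dt {R n}.

Theorem mainTheorem2 (R : realType) (n : nat) (A : 'I_n -> vec3 R) :
  odd n -> generic A -> ~ regular A ->
  forall p nrm : vec3 R, nrm != 0 ->
    regular (fun i => reflect_plane p nrm (A i)).
Proof.
move=> hodd hg hnr p nrm hn.
have hD := @generic_Dt R n A hg.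
have hneg : \prod_i Dt (edge A) i < 0.
  rewrite ltNge; apply/negP => hge; apply: hnr; split => //.
  apply: suff => //; rewrite lt0r hge andbT.
  by apply/prodf_neq0 => i _.
split; first exact: generic_refl.
apply: suff => //.
  by move=> i; rewrite Dt_refl // oppr_eq0.
under eq_bigr => i _ do rewrite Dt_refl //.
by rewrite prodrN card_ord -signr_odd hodd expr1 mulN1r oppr_gt0.
Qed.
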